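(* In the standing setting, assume (MP). Let $\beta$ be the Bellman strategy. Then for every player strategy $s$: $\mathbb E_\beta[U]=\varphi^v(0,\sigma^v(0))\ge\mathbb E_s[U]$, and for every $t\in\{1,\dots,\overline R\}$ and every admissible history $h_t=(u_0,\delta_0,\dots,u_{t-1},\delta_{t-1})$, $$\mathbb E_\beta[U\mid h_t]=\varphi^v(t,u_{t-1},\delta_{t-1})\ge \mathbb E_s[U\mid h_t].$$
   Context: Standing setting. Integers $n\ge2$, $m\ge1$; $N:=(n-1)m$. Reals $p_{\mathrm{init}}\ge0$, $\Delta P>0$; the price at round $t\ge0$ is $p_t:=p_{\mathrm{init}}+t\Delta P$. The player's valuation $v:\{0,\dots,m\}\to[0,\infty)$ satisfies $v(0)=0$ and is non-decreasing and concave. $\overline R:=\lceil (v(1)-p_{\mathrm{init}})/\Delta P\rceil$, assumed $\ge1$. For $t\ge0$, $\sigma^v(t):=\min\operatorname{argmax}_{0\le u\le m}(v(u)-up_t)$. The opponent is given by random variables $Z_1\ge Z_2\ge\dots\ge Z_N\ge0$ (a.s.) on a probability space $(\Omega,\mathcal F,\mathbb P)$; its demand at price $p$ is $\delta(p):=\sum_{j=1}^N\mathbf 1\{Z_j>p\}$. For $t\ge1$ fix transition kernels $K_t(\delta'\mid\delta)$ ($\delta,\delta'\in\{0,\dots,N\}$), each $K_t(\cdot\mid\delta)$ a probability on $\{0,\dots,\delta\}$, with $K_t(\delta'\mid\delta)=\mathbb P(\delta(p_t)=\delta'\mid\delta(p_{t-1})=\delta)$ whenever $\mathbb P(\delta(p_{t-1})=\delta)>0$.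 Value function: for $t\in\{1,\dots,\overline R\}$, $k\in\{0,\dots,m\}$, $\delta\in\{0,\dots,N\}$: $\varphi^v(t,k,\delta):=v(k)-kp_{t-1}$ if $k+\delta\le m$; $:=\max_{0\le u\le k}\sum_{\delta'=0}^N K_t(\delta'\mid\delta)\varphi^v(t+1,u,\delta')$ if $k+\delta>m$ and $t<\overline R$; $:=0$ if $k+\delta>m$ and $t=\overline R$. Also $\varphi^v(0,k):=\max_{0\le u\le k}\sum_{\delta'}\mathbb P(\delta(p_0)=\delta')\varphi^v(1,u,\delta')$. Auction. A player strategy $s=(s_t)_{0\le t\le\overline R-1}$ assigns to each history $h_t=(u_0,\delta_0,\dots,u_{t-1},\delta_{t-1})$ a bid $u_t=s_t(h_t)\in\{0,\dots,u_{t-1}\}$, where $u_{-1}:=\sigma^v(0)$. Against the straightforward opponent, the opponent's round-$t$ demand is $\delta_t:=\delta(p_t)$. The auction ends at the first round $\tau\in\{0,\dots,\overline R-1\}$ with $u_\tau+\delta_\tau\le m$ and the player's utility is $U:=v(u_\tau)-u_\tau p_\tau$; if there is no such round, $U:=0$. A history $h_t$ ($t\ge1$) is admissible if $u_0\le\sigma^v(0)$, $u_r\le u_{r-1}$, $u_r+\delta_r>m$ for all $r\le t-2$, and $\mathbb P(\delta(p_r)=\delta_r\ \forall r\le t-1)>0$. $\mathbb E_s[U\mid h_t]$ denotes the conditional expectation of $U$ given $\{\delta(p_r)=\delta_r,\ r\le t-1\}$ when the player's bids at rounds $0,\dots,t-1$ are $u_0,\dots,u_{t-1}$ and at rounds $r\ge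 t$ are $s_r(h_r)$. Bellman strategy: $\beta^v(0,k):=\min\operatorname{argmax}_{0\le u\le k}\sum_{\delta'}\mathbb P(\delta(p_0)=\delta')\varphi^v(1,u,\delta')$, and for $t\in\{1,\dots,\overline R-1\}$, $\beta^v(t,k,\delta):=\min\operatorname{argmax}_{0\le u\le k}\sum_{\delta'}K_t(\delta'\mid\delta)\varphi^v(t+1,u,\delta')$. The Bellman strategy $\beta$ bids $u_0=\beta^v(0,\sigma^v(0))$ and $u_t=\beta^v(t,u_{t-1},\delta_{t-1})$ for $t\ge1$. Markov property (MP): $(\delta(p_t))_{0\le t\le\overline R}$ is a Markov chain. *)

(* Defs.v *)
From mathcomp Require Import all_boot all_order all_algebra.
From mathcomp Require Import all_classical all_reals all_analysis.


Import Order.TTheory GRing.Theory Num.Theory.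
Local Open Scope ring_scope.
Local Open Scope classical_set_scope.

Definition Nop (n m : nat) : nat := ((n - 1) * m)%N.

Definition price {R : realType} (pinit dP : R) (t : nat) : R :=
  pinit + t%:R * dP.

Definition Rbar {R : realType} (pinit dP : R) (v : nat -> R) : nat :=
  `|Num.ceil ((v 1%N - pinit) / dP)|%N.

Definition maxu {R : realType} (k : nat) (f : nat -> R) : R :=
  \big[Num.max/f 0%N]_(u < k.+1) f u.

Definition argminmax {R : realType} (k : nat) (f : nat -> R) : nat :=
  find (fun u => f u == maxu k f) (iota 0 k.+1).

Definition sigmav {R : realType} (m : nat) (pinit dP : R) (v : nat -> R)
  (t : nat) : nat :=
  argminmax m (fun u => v u - u%:R * price pinit dP t).

Definition valuation_ok {R : realType} (m : nat) (v : nat -> R) : Prop :=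
  [/\ v 0%N = 0,
      (forall k, (k <= m)%N -> 0 <= v k),
      (forall k, (k < m)%N -> v k <= v k.+1) &
      (forall k, (1 <= k)%N -> (k.+1 <= m)%N ->
          v k.+1 - v k <= v k - v k.-1)].

Definition demand {R : realType} {d : measure_display} {T : measurableType d}
  (n m : nat) (pinit dP : R) (Z : 'I_(Nop n m) -> T -> R) (t : nat) (w : T)
  : nat :=
  #|[pred j : 'I_(Nop n m) | price pinit dP t < Z j w]|.

Definition Pr {R : realType} {d : measure_display} {T : measurableType d}
  (P : probability T R) (A : set T) : R := fine (P A).

Definition Z_ordered {R : realType} {d : measure_display} {T : measurableType d}
  (P : probability T R) (N : nat) (Z : 'I_N -> T -> R) : Prop :=
  {ae P, forall w, (forall i j : 'I_N, (i <= j)%N -> Z j w <= Z i w) /\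
                   (forall j : 'I_N, 0 <= Z j w)}.

Definition kernel_ok {R : realType} (N : nat) (K : nat -> nat -> nat -> R)
  : Prop :=
  forall t dl, (1 <= t)%N -> (dl <= N)%N ->
    [/\ (forall dl', 0 <= K t dl dl'),
        (forall dl', (dl < dl')%N -> K t dl dl' = 0) &
        \sum_(dl' < dl.+1) K t dl dl' = 1].

Definition kernel_consistent {R : realType} {d : measure_display}
  {T : measurableType d} (P : probability T R) (n m : nat) (pinit dP : R)
  (Z : 'I_(Nop n m) -> T -> R) (K : nat -> nat -> nat -> R) : Prop :=
  forall t dl dl', (1 <= t)%N -> (dl <= Nop n m)%N -> (dl' <= Nop n m)%N ->
    0 < Pr P [set w | demand n m pinit dP Z t.-1 w = dl] ->
    K t dl dl' =
      Pr P [set w | demand n m pinit dP Z t w = dl' /\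
                    demand n m pinit dP Z t.-1 w = dl]
      / Pr P [set w | demand n m pinit dP Z t.-1 w = dl].

Definition markov_property {R : realType} {d : measure_display}
  {T : measurableType d} (P : probability T R) (n m : nat) (pinit dP : R)
  (Z : 'I_(Nop n m) -> T -> R) (Rb : nat) : Prop :=
  forall t (x : nat -> nat), (1 <= t)%N -> (t <= Rb)%N ->
    0 < Pr P [set w | forall r, (r < t)%N -> demand n m pinit dP Z r w = x r] ->
    Pr P [set w | forall r, (r <= t)%N -> demand n m pinit dP Z r w = x r]
      / Pr P [set w | forall r, (r < t)%N -> demand n m pinit dP Z r w = x r]
    = Pr P [set w | demand n m pinit dP Z t w = x t /\
                    demand n m pinit dP Z t.-1 w = x t.-1]
      / Pr P [set w | demand n m pinit dP Z t.-1 w = x t.-1].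

(* phi_rec r t k dl computes phi^v(t,k,dl) where r = Rbar - t. *)
Fixpoint phi_rec {R : realType} (m N : nat) (pinit dP : R) (v : nat -> R)
  (K : nat -> nat -> nat -> R) (r t k dl : nat) : R :=
  if (k + dl <= m)%N then v k - k%:R * price pinit dP t.-1
  else match r with
       | 0%N => 0
       | r'.+1 => maxu k (fun u =>
           \sum_(dl' < N.+1) K t dl dl' * phi_rec m N pinit dP v K r' t.+1 u dl')
       end.

Definition phi {R : realType} (m N : nat) (pinit dP : R) (v : nat -> R)
  (K : nat -> nat -> nat -> R) (t k dl : nat) : R :=
  phi_rec m N pinit dP v K (Rbar pinit dP v - t) t k dl.

Definition obj0 {R : realType} {d : measure_display} {T : measurableType d}
  (P : probability T R) (n m : nat) (pinit dP : R) (v : nat -> R)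
  (Z : 'I_(Nop n m) -> T -> R) (K : nat -> nat -> nat -> R) (u : nat) : R :=
  \sum_(dl' < (Nop n m).+1)
     Pr P [set w | demand n m pinit dP Z 0 w = dl'] *
     phi m (Nop n m) pinit dP v K 1 u dl'.

Definition phi0 {R : realType} {d : measure_display} {T : measurableType d}
  (P : probability T R) (n m : nat) (pinit dP : R) (v : nat -> R)
  (Z : 'I_(Nop n m) -> T -> R) (K : nat -> nat -> nat -> R) (k : nat) : R :=
  maxu k (obj0 P n m pinit dP v Z K).

Definition beta0 {R : realType} {d : measure_display} {T : measurableType d}
  (P : probability T R) (n m : nat) (pinit dP : R) (v : nat -> R)
  (Z : 'I_(Nop n m) -> T -> R) (K : nat -> nat -> nat -> R) (k : nat) : nat :=
  argminmax k (obj0 P n m pinit dP v Z K).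

Definition betat {R : realType} (m N : nat) (pinit dP : R) (v : nat -> R)
  (K : nat -> nat -> nat -> R) (t k dl : nat) : nat :=
  argminmax k (fun u =>
    \sum_(dl' < N.+1) K t dl dl' * phi m N pinit dP v K t.+1 u dl').

(* A history h_t = (u_0,delta_0,...,u_{t-1},delta_{t-1}) is the list of
   pairs (u_r, delta_r); its length is t. *)
Notation history := (seq (nat * nat)).

(* u_{t-1}, with u_{-1} := sigma^v(0) *)
Definition prevbid {R : realType} (m : nat) (pinit dP : R) (v : nat -> R)
  (h : history) : nat :=
  if h is [::] then sigmav m pinit dP v 0 else (last (0, 0)%N h).1.

Definition is_strategy {R : realType} (m : nat) (pinit dP : R) (v : nat -> R)
  (s : history -> nat) : Prop :=
  forall h : history, (size h < Rbar pinit dP v)%N ->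
    (s h <= prevbid m pinit dP v h)%N.

Definition bellman {R : realType} {d : measure_display} {T : measurableType d}
  (P : probability T R) (n m : nat) (pinit dP : R) (v : nat -> R)
  (Z : 'I_(Nop n m) -> T -> R) (K : nat -> nat -> nat -> R) (h : history)
  : nat :=
  match h with
  | [::] => beta0 P n m pinit dP v Z K (sigmav m pinit dP v 0)
  | _ :: _ => betat m (Nop n m) pinit dP v K (size h)
                (last (0, 0)%N h).1 (last (0, 0)%N h).2
  end.

Fixpoint run {R : realType} {d : measure_display} {T : measurableType d}
  (n m : nat) (pinit dP : R) (Z : 'I_(Nop n m) -> T -> R)
  (s : history -> nat) (h0 : history) (w : T) (k : nat) : history :=
  match k with
  | 0%N => h0
  | k'.+1 => let h := run n m pinit dP Z s h0 w k' in
             rcons h (s h, demand n m pinit dP Z (size h) w)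
  end.

(* Utility of a full history of rounds 0..Rbar-1: the auction ends at the
   first round tau with u_tau + delta_tau <= m, utility v(u_tau) - u_tau p_tau;
   0 if there is no such round. *)
Definition utility {R : realType} (m : nat) (pinit dP : R) (v : nat -> R)
  (H : history) : R :=
  let i := find (fun x : nat * nat => (x.1 + x.2 <= m)%N) H in
  if (i < size H)%N then
    let u := (nth (0, 0)%N H i).1 in v u - u%:R * price pinit dP i
  else 0.

(* U(w) when the bids of rounds < size h0 are those of h0 and the bids of
   the later rounds r < Rbar are s_r(h_r). *)
Definition payoff {R : realType} {d : measure_display} {T : measurableType d}
  (n m : nat) (pinit dP : R) (v : nat -> R) (Z : 'I_(Nop n m) -> T -> R)
  (s : history -> nat) (h0 : history) (w : T) : R :=
  utility m pinit dP v (run n m pinit dP Z s h0 w (Rbar pinit dP v - size h0)).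

Definition hev {R : realType} {d : measure_display} {T : measurableType d}
  (n m : nat) (pinit dP : R) (Z : 'I_(Nop n m) -> T -> R) (h : history)
  : set T :=
  [set w | forall r, (r < size h)%N -> demand n m pinit dP Z r w = (nth (0, 0)%N h r).2].

Definition ExpU {R : realType} {d : measure_display} {T : measurableType d}
  (P : probability T R) (n m : nat) (pinit dP : R) (v : nat -> R)
  (Z : 'I_(Nop n m) -> T -> R) (s : history -> nat) : R :=
  fine (\int[P]_w (payoff n m pinit dP v Z s [::] w)%:E).

Definition CondExpU {R : realType} {d : measure_display} {T : measurableType d}
  (P : probability T R) (n m : nat) (pinit dP : R) (v : nat -> R)
  (Z : 'I_(Nop n m) -> T -> R) (s : history -> nat) (h : history) : R :=
  fine (\int[P]_(w in hev n m pinit dP Z h) (payoff n m pinit dP v Z s h w)%:E)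
  / Pr P (hev n m pinit dP Z h).

Definition admissible {R : realType} {d : measure_display} {T : measurableType d}
  (P : probability T R) (n m : nat) (pinit dP : R) (v : nat -> R)
  (Z : 'I_(Nop n m) -> T -> R) (h : history) : Prop :=
  [/\ (1 <= size h)%N,
      ((nth (0, 0)%N h 0).1 <= sigmav m pinit dP v 0)%N,
      (forall r, (1 <= r)%N -> (r < size h)%N ->
         ((nth (0, 0)%N h r).1 <= (nth (0, 0)%N h r.-1).1)%N),
      (forall r, (r.+2 <= size h)%N ->
         (m < (nth (0, 0)%N h r).1 + (nth (0, 0)%N h r).2)%N) &
      0 < Pr P (hev n m pinit dP Z h)].

(* Main.v *)
Require Import Defs.
From mathcomp Require Import all_boot all_order all_algebra.
From mathcomp Require Import all_classical all_reals all_analysis.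
Import Order.TTheory GRing.Theory Num.Theory.
Local Open Scope ring_scope.

Section Aux.
Context (R : realType) (d : measure_display) (T : measurableType d)
  (P : probability T R) (n m : nat) (pinit dP : R) (v : nat -> R)
  (Z : 'I_(Nop n m) -> T -> R) (K : nat -> nat -> nat -> R).

Local Notation D := (demand n m pinit dP Z).
Local Notation Rb := (Rbar pinit dP v).
Local Notation N := (Nop n m).
Local Notation phiv := (phi m N pinit dP v K).

Lemma run_front s k h w :
  run n m pinit dP Z s h w k.+1 =
  run n m pinit dP Z s (rcons h (s h, D (size h) w)) w k.
Proof.
have E : forall h0 k', run n m pinit dP Z s h0 w k'.+1 =
  rcons (run n m pinit dP Z s h0 w k')
   (s (run n m pinit dP Z s h0 w k'), D (size (run n m pinit dP Z s h0 w k')) w) by [].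
by elim: k => [//|k IH]; rewrite E IH -E.
Qed.

Lemma run_prefix s k h w : exists r, run n m pinit dP Z s h w k = h ++ r.
Proof.
elim: k => [|k [r IH]]; first by exists [::]; rewrite cats0.
by exists (rcons r (s (h ++ r), D (size (h ++ r)) w)); rewrite /= IH rcons_cat.
Qed.

Lemma payoff_front s h w : (size h < Rb)%N ->
  payoff n m pinit dP v Z s h w =
  payoff n m pinit dP v Z s (rcons h (s h, D (size h) w)) w.
Proof.
move=> hlt; rewrite /payoff size_rcons.
have -> : (Rb - size h = (Rb - (size h).+1).+1)%N by rewrite subnSK.
by rewrite run_front.
Qed.

Definition pre_ok (h : seq (nat * nat)) := forall r, (r.+2 <= size h)%N ->
  (m < (nth (0, 0)%N h r).1 + (nth (0, 0)%N h r).2)%N.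

Definition stp := (fun x : nat * nat => (x.1 + x.2 <= m)%N).

Lemma find_pre h : (0 < size h)%N -> pre_ok h ->
  find stp h = if stp (last (0,0)%N h) then (size h).-1 else size h.
Proof.
case/lastP: h => [//|h x] _ hp.
have hn : ~~ has stp h.
  apply/hasPn => y /(nthP (0,0)%N) [r rlt <-]; rewrite /stp -ltnNge.
  have := hp r; rewrite size_rcons nth_rcons rlt; apply; by rewrite ltnS.
rewrite -cats1 find_cat (negbTE hn) last_cat /= size_cat /= addn1.
by case: (stp x) => /=; rewrite ?addn0 ?addn1.
Qed.

Lemma utility_stop h r : (0 < size h)%N -> pre_ok h -> stp (last (0,0)%N h) ->
  utility m pinit dP v (h ++ r) =
  v (last (0,0)%N h).1 - ((last (0,0)%N h).1)%:R * price pinit dP (size h).-1.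
Proof.
move=> h0 hp hs; rewrite /utility find_cat.
have hh : has stp h.
  apply/hasP; exists (last (0,0)%N h) => //.
  by case: h h0 {hp hs} => // a l _ /=; exact: mem_last.
rewrite hh (find_pre _ h0 hp) hs size_cat nth_cat.
have hlt : ((size h).-1 < size h)%N by rewrite prednK.
rewrite hlt (leq_trans hlt (leq_addr _ _)) nth_last.
done.
Qed.

Lemma utility_nostop h : (0 < size h)%N -> pre_ok h -> ~~ stp (last (0,0)%N h) ->
  utility m pinit dP v h = 0.
Proof.
move=> h0 hp hs; rewrite /utility (find_pre _ h0 hp) (negbTE hs) ltnn //.
Qed.


Lemma phi_stop t k dl : (k + dl <= m)%N ->
  phiv t k dl = v k - k%:R * price pinit dP t.-1.
Proof. by move=> H; rewrite /phi; case: (Rb - t)%N => [|r] /=; rewrite H. Qed.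

Lemma phi_end t k dl : ~~ (k + dl <= m)%N -> (Rb <= t)%N -> phiv t k dl = 0.
Proof.
move=> H Ht; rewrite /phi.
have -> : (Rb - t = 0)%N by apply/eqP; rewrite subn_eq0.
by rewrite /= (negbTE H).
Qed.

Lemma phi_step t k dl : ~~ (k + dl <= m)%N -> (t < Rb)%N ->
  phiv t k dl = maxu k (fun u => \sum_(dl' < N.+1) K t dl dl' * phiv t.+1 u dl').
Proof.
move=> H Ht; rewrite /phi.
have -> : (Rb - t = (Rb - t.+1).+1)%N by rewrite subnSK.
by rewrite /= (negbTE H).
Qed.

Lemma maxu_iota k (f : nat -> R) :
  maxu k f = \big[Num.max/f 0%N]_(i <- iota 0 k.+1) f i.
Proof. by rewrite /maxu -(@big_mkord _ (f 0%N) Num.max k.+1 xpredT f) /index_iota subn0. Qed.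

Lemma le_maxu k (f : nat -> R) u : (u <= k)%N -> f u <= maxu k f.
Proof.
rewrite maxu_iota -ltnS => hu.
have : u \in iota 0 k.+1 by rewrite mem_iota add0n hu.
elim: (iota 0 k.+1) => [//|a l IH]; rewrite inE big_cons => /orP [/eqP ->|/IH H].
  by rewrite le_max lexx.
by rewrite le_max H orbT.
Qed.

Lemma maxu_att k (f : nat -> R) : exists2 u, (u <= k)%N & f u = maxu k f.
Proof.
rewrite /maxu; apply: (big_ind (fun x => exists2 u, (u <= k)%N & f u = x)).
- by exists 0%N.
- move=> x y [u hu <-] [u' hu' <-].
  by case: (leP (f u) (f u')) => _; [exists u'|exists u].
- by move=> i _; exists i => //; rewrite -ltnS.
Qed.

Lemma argminmax_spec k (f : nat -> R) :
  (argminmax k f <= k)%N /\ f (argminmax k f) = maxu k f.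
Proof.
have hh : has (fun u => f u == maxu k f) (iota 0 k.+1).
  have [u hu fu] := maxu_att k f.
  by apply/hasP; exists u; rewrite ?mem_iota ?add0n ?ltnS ?fu.
have hf := hh; rewrite has_find size_iota in hf.
have := nth_find 0%N hh.
by rewrite /argminmax nth_iota // add0n => /eqP ->; split => //.
Qed.


Local Open Scope classical_set_scope.

Lemma D_le t w : (D t w <= N)%N.
Proof. by rewrite /demand (leq_trans (max_card _)) // card_ord. Qed.

Hypothesis hZ : forall j, measurable_fun [set: T] (Z j).

Lemma meas_D t x : measurable [set w | D t w = x].
Proof.
pose A j := [set w | price pinit dP t < Z j w].
have mA j : measurable (A j).
  have := hZ j measurableT _ (measurable_itv `]price pinit dP t, +oo[%O).
  rewrite setTI; congr (measurable _); apply/seteqP; split => w /=;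
    by rewrite in_itv /= andbT.
pose g w := \sum_(j : 'I_N) (\1_(A j) w : R).
have mg : measurable_fun [set: T] g.
  by rewrite /g; apply: measurable_sum => j; exact: (measurable_realfun.measurable_indic (mA j)).
have gE w : g w = (D t w)%:R.
  rewrite /g /demand -sum1_card natr_sum big_mkcond /=.
  rewrite [RHS]big_mkcond /=; apply: eq_bigr => j _; rewrite indicE.
  rewrite inE /= /A; case: ifP => H; [by rewrite mem_set | by rewrite memNset //= H].
have := mg measurableT _ (measurable_set1 (x%:R : R)).
rewrite setTI; congr (measurable _); apply/seteqP; split => w /=.
  by rewrite gE => /eqP; rewrite eqr_nat => /eqP.
by rewrite gE => ->.
Qed.


Local Notation hev := (hev n m pinit dP Z).
Local Notation payoff := (payoff n m pinit dP v Z).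

Lemma hev_nil : hev [::] = [set: T].
Proof. by apply/seteqP; split => w //= _ r. Qed.

Lemma hev_rcons h u x :
  hev (rcons h (u, x)) = hev h `&` [set w | D (size h) w = x].
Proof.
apply/seteqP; split => w /=.
  move=> H; split.
    move=> r rlt; have := H r; rewrite size_rcons nth_rcons rlt; apply.
    exact: ltnW.
  by have := H (size h); rewrite size_rcons nth_rcons ltnn eqxx; apply.
move=> [H1 H2] r; rewrite size_rcons ltnS leq_eqVlt nth_rcons.
case/orP => [/eqP ->|rlt]; first by rewrite ltnn eqxx.
by rewrite rlt; apply: H1.
Qed.

Lemma meas_hev h : measurable (hev h).
Proof.
elim/last_ind: h => [|h [u x] IH]; first by rewrite hev_nil.
by rewrite hev_rcons; apply: measurableI => //; exact: meas_D.
Qed.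

Lemma payoff_cst s h : (Rb <= size h)%N ->
  payoff s h = cst (utility m pinit dP v h).
Proof.
move=> H; apply/funext => w; rewrite /payoff.
by have -> : (Rb - size h = 0)%N by apply/eqP; rewrite subn_eq0.
Qed.

Lemma meas_payoff k : forall s h, (Rb <= size h + k)%N ->
  measurable_fun [set: T] (payoff s h).
Proof.
elim: k => [|k IH] s h H.
  by rewrite addn0 in H; rewrite payoff_cst.
case: (leqP Rb (size h)) => H1.
  by rewrite payoff_cst.
have -> : payoff s h = (fun w => \sum_(x < N.+1)
    (\1_[set w | D (size h) w = x] w : R) * payoff s (rcons h (s h, (x : nat))) w).
  apply/funext => w; rewrite payoff_front //.
  rewrite (bigD1 (Ordinal (D_le (size h) w : (D (size h) w < N.+1)%N))) //=.
  rewrite big1 ?addr0.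
    by rewrite indicE mem_set // mul1r.
  move=> i /eqP hi; rewrite indicE memNset ?mul0r //= => hx; apply: hi.
  by apply/val_inj => /=.
apply: measurable_sum => x; apply: measurable_realfun.measurable_funM.
  exact: (measurable_realfun.measurable_indic (meas_D _ _)).
by apply: IH; rewrite size_rcons addSnnS.
Qed.


Lemma split_int s h : (size h < Rb)%N ->
  (\int[P]_(w in hev h) (payoff s h w)%:E =
   \sum_(x < N.+1) \int[P]_(w in hev (rcons h (s h, (x:nat))))
        (payoff s (rcons h (s h, (x:nat))) w)%:E)%E.
Proof.
move=> hlt.
have E : hev h = \big[setU/set0]_(x <- iota 0 N.+1) hev (rcons h (s h, x)).
  rewrite -bigcup_seq; apply/seteqP; split => w.
    move=> hw; exists (D (size h) w).
      by change (D (size h) w \in iota 0 N.+1); rewrite mem_iota add0n ltnS D_le.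
    by rewrite hev_rcons.
  by move=> [x _]; rewrite hev_rcons => -[].
rewrite E integral_bigsetU_EFin //.
- rewrite -(big_mkord xpredT (fun x : nat => \int[P]_(w in hev (rcons h (s h, x)))
        (payoff s (rcons h (s h, x)) w)%:E)%E) /index_iota subn0.
  apply: eq_bigr => x _; apply: eq_integral => w; rewrite inE hev_rcons => -[_ hw].
  by rewrite payoff_front // hw.
- by move=> x; exact: meas_hev.
- exact: iota_uniq.
- apply/trivIsetP => x y _ _ xy; apply/seteqP; split => // w.
  rewrite !hev_rcons => -[[_ h1] [_ h2]]; move/eqP: xy; apply.
  by rewrite -h1 -h2.
- apply/measurable_realfun.measurable_EFinP; apply: measurable_funTS.
  by apply: (meas_payoff (Rb - size h)); rewrite subnKC // ltnW.
Qed.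


Lemma Pr_fin A : measurable A -> P A = (Pr P A)%:E.
Proof. by move=> mA; rewrite /Pr fineK // fin_num_measure. Qed.

Lemma Pr_ge0 A : measurable A -> 0 <= Pr P A.
Proof. by move=> mA; rewrite -lee_fin -Pr_fin. Qed.

Lemma Pr_mono A B : measurable A -> measurable B -> A `<=` B -> Pr P A <= Pr P B.
Proof.
move=> mA mB AB; rewrite -lee_fin -!Pr_fin //.
by apply: le_measure => //; rewrite inE.
Qed.

Lemma Pr_pos_ex A : 0 < Pr P A -> exists w, A w.
Proof.
move=> H; apply: contrapT => nA.
suff A0 : A = set0 by rewrite A0 /Pr measure0 /= ltxx in H.
by apply/seteqP; split => // w hw; apply: nA; exists w.
Qed.

Hypothesis hK : kernel_consistent P n m pinit dP Z K.
Hypothesis hMP : markov_property P n m pinit dP Z Rb.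

Lemma mp_step h u x : (0 < size h)%N -> (size h <= Rb)%N -> (x <= N)%N ->
  0 < Pr P (hev h) ->
  Pr P (hev (rcons h (u,x))) = K (size h) (last (0,0)%N h).2 x * Pr P (hev h).
Proof.
move=> h0 hle xle hpos.
pose xf r := (nth (0,0)%N (rcons h (u,x)) r).2.
have E1 : [set w | forall r, (r < size h)%N -> D r w = xf r] = hev h.
  apply/seteqP; split => w /= H r rlt; have := H r rlt; by rewrite /xf nth_rcons rlt.
have E2 : [set w | forall r, (r <= size h)%N -> D r w = xf r] = hev (rcons h (u,x)).
  apply/seteqP; split => w /= H r.
    by rewrite size_rcons ltnS; apply: H.
  by rewrite -ltnS -(size_rcons h (u,x)); apply: H.
have xt : xf (size h) = x by rewrite /xf nth_rcons ltnn eqxx.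
have ht1 : ((size h).-1 < size h)%N by rewrite prednK.
have xt1 : xf (size h).-1 = (last (0,0)%N h).2 by rewrite /xf nth_rcons ht1 nth_last.
have M := hMP (size h) xf h0 hle; rewrite E1 in M; have {}M := M hpos; rewrite E2 xt xt1 in M.
have [w hw] := Pr_pos_ex _ hpos.
have dlw : D (size h).-1 w = (last (0,0)%N h).2 by rewrite -nth_last; apply: hw.
have dle : ((last (0,0)%N h).2 <= N)%N by rewrite -dlw D_le.
have hpos' : 0 < Pr P [set w | D (size h).-1 w = (last (0,0)%N h).2].
  apply: (lt_le_trans hpos); apply: Pr_mono; [exact: meas_hev|exact: meas_D|].
  by move=> w' hw'; rewrite /= -nth_last; apply: hw'.
rewrite (hK _ _ _ h0 dle xle hpos') -M divfK //.
by rewrite gt_eqF.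
Qed.


Lemma int_cst A (c : R) : measurable A ->
  (\int[P]_(w in A) (c%:E) = (c * Pr P A)%:E)%E.
Proof. by move=> mA; rewrite integral_cst // /Pr EFinM fineK ?fin_num_measure. Qed.

Lemma pre_ok_rcons h y : (0 < size h)%N -> pre_ok h -> ~~ stp (last (0,0)%N h) ->
  pre_ok (rcons h y).
Proof.
move=> h0 hp hs r; rewrite size_rcons ltnS => hr.
rewrite nth_rcons hr; move: hr; rewrite leq_eqVlt => /orP [/eqP hr|hr].
  have -> : r = (size h).-1 by rewrite -hr.
  by rewrite nth_last ltnNge.
by apply: hp.
Qed.

Lemma strat_le s h : is_strategy m pinit dP v s -> (0 < size h)%N -> (size h < Rb)%N ->
  (s h <= (last (0,0)%N h).1)%N.
Proof. by move=> hs; case: h => // a l _ hl; apply: (hs (a :: l)). Qed.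

Lemma main (beta : seq (nat * nat) -> nat)
  (hbeta : forall h, (0 < size h)%N ->
     beta h = betat m N pinit dP v K (size h) (last (0,0)%N h).1 (last (0,0)%N h).2)
  k : forall h s, is_strategy m pinit dP v s -> (size h + k = Rb)%N ->
  (0 < size h)%N -> pre_ok h ->
  let J := (\int[P]_(w in hev h) (payoff s h w)%:E)%E in
  [/\ J = (fine J)%:E,
      fine J <= Pr P (hev h) * phiv (size h) (last (0,0)%N h).1 (last (0,0)%N h).2 &
      (s = beta -> fine J =
         Pr P (hev h) * phiv (size h) (last (0,0)%N h).1 (last (0,0)%N h).2)].
Proof.
elim: k => [|k IH] h s hs hsz h0 hp J.
all: set L := last (0,0)%N h.
all: have [hst|hst] := boolP (stp L).
- have pE : payoff s h = cst (v L.1 - L.1%:R * price pinit dP (size h).-1).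
    apply/funext => w; rewrite /payoff; have [r ->] := run_prefix s (Rb - size h) h w.
    exact: utility_stop.
  rewrite /J pE int_cst /=; last exact: meas_hev.
  by rewrite phi_stop // mulrC; split.
- rewrite addn0 in hsz.
  have pE : payoff s h = cst 0.
    by rewrite payoff_cst ?hsz // utility_nostop.
  rewrite /J pE int_cst /=; last exact: meas_hev.
  by rewrite phi_end ?hsz // !mul0r mulr0; split.
- have pE : payoff s h = cst (v L.1 - L.1%:R * price pinit dP (size h).-1).
    apply/funext => w; rewrite /payoff; have [r ->] := run_prefix s (Rb - size h) h w.
    exact: utility_stop.
  rewrite /J pE int_cst /=; last exact: meas_hev.
  by rewrite phi_stop // mulrC; split.
have hlt : (size h < Rb)%N by rewrite -hsz -addn1 leq_add2l.
have ule := strat_le s h hs h0 hlt.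
set u := s h in ule *.
have IHx : forall x : nat, let J := (\int[P]_(w in hev (rcons h (u, x)))
     (payoff s (rcons h (u, x)) w)%:E)%E in
  [/\ J = (fine J)%:E,
      fine J <= Pr P (hev (rcons h (u, x))) * phiv (size h).+1 u x &
      (s = beta -> fine J = Pr P (hev (rcons h (u, x))) * phiv (size h).+1 u x)].
  move=> x; have := IH (rcons h (u, x)) s hs.
  rewrite size_rcons last_rcons addSnnS; apply => //.
  exact: pre_ok_rcons.
have E : (\sum_(x < N.+1) \int[P]_(w in hev (rcons h (u, (x:nat))))
     (payoff s (rcons h (u, (x:nat))) w)%:E)%E =
   (\sum_(x < N.+1) fine (\int[P]_(w in hev (rcons h (u, (x:nat))))
     (payoff s (rcons h (u, (x:nat))) w)%:E))%:E.
  rewrite -sumEFin; apply: eq_bigr => x _; by have [e _ _] := IHx x.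
rewrite /J split_int // E /=.
have hst' : ~~ (L.1 + L.2 <= m)%N by [].
rewrite (phi_step _ _ _ hst' hlt).
set f := (fun u0 => \sum_(dl' < N.+1) K (size h) L.2 dl' * phiv (size h).+1 u0 dl').
have [hz|hpos] : Pr P (hev h) = 0 \/ 0 < Pr P (hev h).
  by have := Pr_ge0 _ (meas_hev h); rewrite le0r => /orP [/eqP ->|->]; [left|right].
- have hzx : forall x : nat, Pr P (hev (rcons h (u, x))) = 0.
    move=> x; apply/le_anti/andP; split; last exact: Pr_ge0 _ (meas_hev _).
    rewrite -hz; apply: Pr_mono; [exact: meas_hev|exact: meas_hev|].
    by rewrite hev_rcons; apply: subIsetl.
  rewrite hz mul0r; split => //.
    apply: (@le_trans _ _ (\sum_(x < N.+1) (0:R))); last by rewrite big1.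
    apply: ler_sum => x _; have [_ le _] := IHx x; by rewrite hzx mul0r in le.
  move=> sb; rewrite big1 // => x _; have [_ _ e] := IHx x; by rewrite e // hzx mul0r.
have prx : forall x : 'I_N.+1, Pr P (hev (rcons h (u, (x:nat)))) =
    K (size h) L.2 x * Pr P (hev h).
  move=> x; apply: mp_step => //; first exact: ltnW.
  by rewrite -ltnS.
have sumE : \sum_(x < N.+1) Pr P (hev (rcons h (u, (x:nat)))) * phiv (size h).+1 u x =
    Pr P (hev h) * f u.
  rewrite /f mulr_sumr; apply: eq_bigr => x _; by rewrite prx mulrAC mulrC.
split => //.
  apply: (@le_trans _ _ (\sum_(x < N.+1) Pr P (hev (rcons h (u, (x:nat)))) * phiv (size h).+1 u x)).
    by apply: ler_sum => x _; have [_ le _] := IHx x.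
  rewrite sumE; apply: ler_wpM2l; [exact: Pr_ge0 _ (meas_hev h)|exact: le_maxu].
move=> sb.
have -> : \sum_(x < N.+1) fine (\int[P]_(w in hev (rcons h (u, (x:nat))))
     (payoff s (rcons h (u, (x:nat))) w)%:E) =
  \sum_(x < N.+1) Pr P (hev (rcons h (u, (x:nat)))) * phiv (size h).+1 u x.
  by apply: eq_bigr => x _; have [_ _ e] := IHx x; rewrite e.
rewrite sumE; congr (_ * _).
have -> : u = argminmax L.1 f by rewrite /u sb hbeta.
by have [_ ->] := argminmax_spec L.1 f.
Qed.


Lemma top (beta : seq (nat * nat) -> nat)
  (hbeta : forall h, (0 < size h)%N ->
     beta h = betat m N pinit dP v K (size h) (last (0,0)%N h).1 (last (0,0)%N h).2)
  s : is_strategy m pinit dP v s -> (0 < Rb)%N ->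
  let J := (\int[P]_w (payoff s [::] w)%:E)%E in
  [/\ J = (fine J)%:E, fine J <= obj0 P n m pinit dP v Z K (s [::]) &
    (s = beta -> fine J = obj0 P n m pinit dP v Z K (s [::]))].
Proof.
move=> hs Rb0 J.
have IHx : forall x : nat, let J := (\int[P]_(w in hev [:: (s [::], x)])
     (payoff s [:: (s [::], x)] w)%:E)%E in
  [/\ J = (fine J)%:E,
      fine J <= Pr P [set w | D 0 w = x] * phiv 1 (s [::]) x &
      (s = beta -> fine J = Pr P [set w | D 0 w = x] * phiv 1 (s [::]) x)].
  move=> x.
  have hx : hev [:: (s [::], x)] = [set w | D 0 w = x].
    by rewrite -[[:: _]]/(rcons [::] (s [::], x)) hev_rcons hev_nil setTI.
  have := main beta hbeta (Rb - 1)%N [:: (s [::], x)] s hs.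
  rewrite /= hx subnKC //; apply => //.
have E : (\sum_(x < N.+1) \int[P]_(w in hev [:: (s [::], (x:nat))])
     (payoff s [:: (s [::], (x:nat))] w)%:E)%E =
   (\sum_(x < N.+1) fine (\int[P]_(w in hev [:: (s [::], (x:nat))])
     (payoff s [:: (s [::], (x:nat))] w)%:E))%:E.
  rewrite -sumEFin; apply: eq_bigr => x _; by have [e _ _] := IHx x.
have JE : J = (\sum_(x < N.+1) \int[P]_(w in hev [:: (s [::], (x:nat))])
     (payoff s [:: (s [::], (x:nat))] w)%:E)%E.
  by rewrite /J -hev_nil (split_int s [::]).
rewrite JE E /=; split => //.
  apply: ler_sum => x _; by have [_ le _] := IHx x.
move=> sb; apply: eq_bigr => x _; have [_ _ e] := IHx x; by rewrite e.
Qed.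

End Aux.


Theorem mainTheorem7 (R : realType) (d : measure_display) (T : measurableType d)
  (P : probability T R) (n m : nat) (pinit dP : R) (v : nat -> R)
  (Z : 'I_(Nop n m) -> T -> R) (K : nat -> nat -> nat -> R) :
  (2 <= n)%N -> (1 <= m)%N -> 0 <= pinit -> 0 < dP ->
  valuation_ok m v ->
  (1 <= Num.ceil ((v 1%N - pinit) / dP))%R ->
  (forall j, measurable_fun [set: T] (Z j)) ->
  Z_ordered P (Nop n m) Z ->
  kernel_ok (Nop n m) K ->
  kernel_consistent P n m pinit dP Z K ->
  markov_property P n m pinit dP Z (Rbar pinit dP v) ->
  let beta := bellman P n m pinit dP v Z K in
  (ExpU P n m pinit dP v Z beta = phi0 P n m pinit dP v Z K (sigmav m pinit dP v 0)
   /\ forall s, is_strategy m pinit dP v s ->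
        ExpU P n m pinit dP v Z s <= phi0 P n m pinit dP v Z K (sigmav m pinit dP v 0))
  /\
  (forall h : seq (nat * nat),
     (1 <= size h <= Rbar pinit dP v)%N ->
     admissible P n m pinit dP v Z h ->
     let ulast := (last (0, 0)%N h).1 in
     let dlast := (last (0, 0)%N h).2 in
     CondExpU P n m pinit dP v Z beta h = phi m (Nop n m) pinit dP v K (size h) ulast dlast
     /\ forall s, is_strategy m pinit dP v s ->
          CondExpU P n m pinit dP v Z s h <= phi m (Nop n m) pinit dP v K (size h) ulast dlast).
Proof.
move=> hn hm hp0 hdP hv hceil hZ hZo hKok hK hMP beta.
have Rb0 : (0 < Rbar pinit dP v)%N.
  move: hceil; rewrite /Rbar; case: (Num.ceil _) => [k|k] //=.
have hbeta : forall h, (0 < size h)%N ->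
     beta h = betat m (Nop n m) pinit dP v K (size h) (last (0,0)%N h).1 (last (0,0)%N h).2.
  by case.
have bstrat : is_strategy m pinit dP v beta.
  move=> h _; case: h => [|a l] /=.
    by have [] := argminmax_spec _ (sigmav m pinit dP v 0)
         (obj0 P n m pinit dP v Z K).
  by rewrite /betat; exact: proj1 (argminmax_spec _ _ _).
split.
  have [e1 _ e3] := @top R d T P n m pinit dP v Z K hZ hK hMP beta hbeta beta bstrat Rb0.
  split.
    rewrite /ExpU e3 //= /beta /= /beta0 /phi0.
    by have [_ ->] := argminmax_spec _ (sigmav m pinit dP v 0) (obj0 P n m pinit dP v Z K).
  move=> s hs; have [_ le _] := @top R d T P n m pinit dP v Z K hZ hK hMP beta hbeta s hs Rb0.
  rewrite /ExpU (le_trans le) // /phi0; apply: le_maxu.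
  by apply: (hs [::]).
move=> h /andP [h1 hle] [_ _ _ hpre hpos] ulast dlast.
have hsz : (size h + (Rbar pinit dP v - size h))%N = Rbar pinit dP v by rewrite subnKC.
have hpre' : pre_ok m h by [].
split.
  have [_ _ e] := @main R d T P n m pinit dP v Z K hZ hK hMP beta hbeta (Rbar pinit dP v - size h) h beta bstrat hsz h1 hpre'.
  by rewrite /CondExpU e // mulrC mulKf // gt_eqF.
move=> s hs; have [_ le _] := @main R d T P n m pinit dP v Z K hZ hK hMP beta hbeta (Rbar pinit dP v - size h) h s hs hsz h1 hpre'.
by rewrite /CondExpU ler_pdivrMr // mulrC.
Qed.
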